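(* Let $A=(a_{i,j})\in\Theta_\vartriangle(n)$ have all diagonal entries zero, write $A=A^++A^-$ with $A^+$ (resp. $A^-$) the matrix keeping the entries $a_{i,j}$ with $i<j$ (resp. $i>j$) and zero elsewhere, and let $\lambda\in\mathbb N^n_\vartriangle$. Define $\mu,\nu\in\mathbb N^n_\vartriangle$ by $\mu_i=\lambda_i+\sum_{k<i}a_{i,k}$ and $\nu_i=\lambda_i+\sum_{k<i}a_{k,i}$. Then $$d_{A+\mathrm{diag}(\lambda)}=d_{A^++\mathrm{diag}(\mu)}+d_{A^-+\mathrm{diag}(\nu)}.$$
   Context: $\Theta_\vartriangle(n)$ is the set of matrices $B=(b_{i,j})_{i,j\in\mathbb Z}$ with $b_{i,j}\in\mathbb N$, $b_{i+n,j+n}=b_{i,j}$ and finitely many nonzero entries in each row. $\mathbb N^n_\vartriangle$ is the set of $n$-periodic sequences $(\lambda_i)_{i\in\mathbb Z}$ of nonnegative integers, and $\mathrm{diag}(\lambda)$ is the diagonal matrix with $(i,i)$ entry $\lambda_i$. For $B\in\Theta_\vartriangle(n)$, $d_B=\sum b_{i,j}b_{k,l}$, summing over all $i,j,k,l\in\mathbb Z$ with $1\le i\le n$, $k\le i$ and $j<l$. *)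

(* Defs.v *)
From mathcomp Require Import all_boot all_order all_algebra.
From mathcomp Require Import boolp classical_sets cardinality fsbigop.
Set Implicit Arguments. Unset Strict Implicit. Unset Printing Implicit Defensive.
Import Order.TTheory GRing.Theory Num.Theory.
Local Open Scope classical_set_scope.
Local Open Scope ring_scope.

Definition zmat := int -> int -> nat.

Definition in_Theta (n : nat) (B : zmat) : Prop :=
  (forall i j : int, B (i + n%:Z) (j + n%:Z) = B i j) /\
  (forall i : int, finite_set [set j : int | B i j != 0%N]).

Definition in_Nn (n : nat) (lam : int -> nat) : Prop :=
  forall i : int, lam (i + n%:Z) = lam i.

Definition zdiag (lam : int -> nat) : zmat :=
  fun i j => if i == j then lam i else 0%N.

Definition zmat_add (A B : zmat) : zmat := fun i j => (A i j + B i j)%N.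

Definition upper_part (A : zmat) : zmat := fun i j => if i < j then A i j else 0%N.
Definition lower_part (A : zmat) : zmat := fun i j => if j < i then A i j else 0%N.

Definition d_mat (n : nat) (B : zmat) : nat :=
  \big[addn/0%N]_(x \in [set x : int * int * int * int |
        let: (i, k, j, l) := x in [/\ (1 <= i)%R, (i <= n%:Z)%R, (k <= i)%R & (j < l)%R]])
    (let: (i, k, j, l) := x in (B i j * B k l)%N).

Definition mu_of (A : zmat) (lam : int -> nat) : int -> nat :=
  fun i => (lam i + \big[addn/0%N]_(k \in [set k : int | (k < i)%R]) A i k)%N.
Definition nu_of (A : zmat) (lam : int -> nat) : int -> nat :=
  fun i => (lam i + \big[addn/0%N]_(k \in [set k : int | (k < i)%R]) A k i)%N.

(* Main.v *)
Require Import Defs.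
From mathcomp Require Import all_boot all_order all_algebra.
From mathcomp Require Import boolp classical_sets cardinality fsbigop.
From mathcomp Require Import zify.
Import Order.TTheory GRing.Theory Num.Theory.
Local Open Scope classical_set_scope.
Local Open Scope ring_scope.

Lemma fsum_seq (T : choiceType) (P : pred T) (f : T -> nat) (r : seq T) :
  uniq r -> (forall x, P x -> f x != 0%N -> x \in r) ->
  \big[addn/0%N]_(x \in [set x | P x]) f x = (\sum_(x <- r | P x) f x)%N.
Proof.
move=> ur sub.
rewrite (fsbigE [seq x <- r | P x]) ?filter_uniq //.
- rewrite big_filter_cond; apply: eq_bigl => x; rewrite mem_setE andbb //.
- by move=> x /=; rewrite mem_filter => /andP[].
- move=> x Px; rewrite mem_filter Px /=.
  by case: (eqVneq (f x) 0%N) => // /(sub x Px) ->.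
Qed.

Definition zbox (lo : int) (N : nat) : seq int := [seq lo + x%:Z | x <- iota 0 N].

Lemma zbox_uniq lo N : uniq (zbox lo N).
Proof. by rewrite map_inj_uniq ?iota_uniq // => x y /addrI []. Qed.

Lemma mem_zbox lo N y : (y \in zbox lo N) = (lo <= y) && (y < lo + N%:Z).
Proof.
apply/mapP/andP => [[x]|[h1 h2]].
  rewrite mem_iota add0n => /andP[hx1 hx2] ->; split; lia.
exists (absz (y - lo)); first by rewrite mem_iota; apply/andP; split; lia.
lia.
Qed.

Lemma per_nat n (A : zmat) : (forall i j, A (i + n%:Z) (j + n%:Z) = A i j) ->
  forall (q : nat) a b, A (a + (q * n)%:Z) (b + (q*n)%:Z) = A a b.
Proof.
move=> hp; elim=> [|q IH] a b; first by rewrite mul0n !addr0.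
have e : forall x : int, x + (q.+1 * n)%:Z = (x + (q*n)%:Z) + n%:Z.
  by move=> x; rewrite mulSn; lia.
by rewrite !e hp IH.
Qed.

Lemma row_bound (A : zmat) (i0 : int) : finite_set [set j : int | A i0 j != 0%N] ->
  exists m : nat, forall j, A i0 j != 0%N -> (absz j <= m)%N.
Proof.
move=> /finite_fsetP [X hX].
exists (\sum_(x <- finmap.enum_fset X) absz x)%N => j hj.
have : [set j : int | A i0 j != 0%N] j by [].
rewrite hX => jX.
rewrite (bigD1_seq (r := finmap.enum_fset X) j jX (finmap.fset_uniq X)) /=. by rewrite leq_addr.
Qed.

Lemma rows_bound (A : zmat) : (forall i, finite_set [set j : int | A i j != 0%N]) ->
  forall p : nat, exists M : nat, forall i0 j : int, 1 <= i0 -> i0 <= p%:Z -> A i0 j != 0%N -> (i0 <= j + M%:Z) && (j <= i0 + M%:Z).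
Proof.
move=> hf; elim=> [|p [M hM]].
  by exists 0%N => i0 j h1 h2; lia.
have [m hm] := @row_bound A (p.+1%:Z) (hf _).
exists (maxn M (m + p.+1))%N => i0 j h1 h2 hne.
have [hlt|heq] : i0 <= p%:Z \/ i0 = p.+1%:Z by lia.
  move/andP: (hM _ _ h1 hlt hne) => [a b]; apply/andP; split; lia.
subst; have := hm _ hne; move=> hj; apply/andP; split; lia.
Qed.

Lemma shift n (A : zmat) : (0 < n)%N -> (forall i j, A (i + n%:Z) (j + n%:Z) = A i j) ->
  forall i j, exists i0 j0, [/\ 1 <= i0, i0 <= n%:Z, j0 - i0 = j - i & A i0 j0 = A i j].
Proof.
move=> n0 hp i j.
have e := divz_eq (i - 1) n%:Z.
have r0 : 0 <= ((i-1) %% n%:Z)%Z by apply: modz_ge0; lia.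
have r1 : ((i-1) %% n%:Z)%Z < n%:Z by apply: ltz_pmod; lia.
move: e r0 r1; set r := ((i-1) %% n%:Z)%Z; case: ((i - 1) %/ n%:Z)%Z => [m|m] e r0 r1.
- exists (r + 1), (j - (m*n)%:Z); split; try lia.
  rewrite -(@per_nat n A hp m (r+1) (j - (m*n)%:Z)); congr (A _ _); lia.
- rewrite NegzE in e.
  exists (r + 1), (j + (m.+1*n)%:Z); split; try lia.
  rewrite -(@per_nat n A hp m.+1 i j); congr (A _ _); lia.
Qed.

Definition band (M : nat) (B : zmat) :=
  forall a b : int, B a b != 0%N -> (a <= b + M%:Z) && (b <= a + M%:Z).

Lemma exists_band n (A : zmat) : (0 < n)%N -> in_Theta n A -> exists M, band M A.
Proof.
move=> n0 [hp hf].
have [M hM] := @rows_bound A hf n.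
exists M => a b hab.
have [i0 [j0 [h1 h2 h3 h4]]] := @shift n A n0 hp a b.
rewrite -h4 in hab; move/andP: (hM _ _ h1 h2 hab) => [u v]; apply/andP; split; lia.
Qed.

Lemma band_add M X Y : band M X -> band M Y -> band M (zmat_add X Y).
Proof.
move=> hX hY a b; rewrite /zmat_add.
case: (eqVneq (X a b) 0%N) => [->|/hX //]; rewrite add0n; exact: hY.
Qed.

Lemma band_diag M f : band M (zdiag f).
Proof.
move=> a b; rewrite /zdiag; case: (eqVneq a b) => [-> _|_ //]; apply/andP; split; lia.
Qed.

Lemma band_upper M A : band M A -> band M (upper_part A).
Proof. by move=> hA a b; rewrite /upper_part; case: ifP => _ //; exact: hA. Qed.

Lemma band_lower M A : band M A -> band M (lower_part A).
Proof. by move=> hA a b; rewrite /lower_part; case: ifP => _ //; exact: hA. Qed.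

Definition quad (s1 s2 : seq int) : seq (int * int * int * int) :=
  [seq (p, l) | p <- [seq (q, j) | q <- [seq (i, k) | i <- s1, k <- s2], j <- s2], l <- s2].

Lemma quad_uniq s1 s2 : uniq s1 -> uniq s2 -> uniq (quad s1 s2).
Proof.
move=> u1 u2; apply: allpairs_uniq => //; last by move=> [? ?] [? ?] _ _ [-> ->].
apply: allpairs_uniq => //; last by move=> [? ?] [? ?] _ _ [-> ->].
apply: allpairs_uniq => //; by move=> [? ?] [? ?] _ _ [-> ->].
Qed.

Lemma mem_quad s1 s2 i k j l : i \in s1 -> k \in s2 -> j \in s2 -> l \in s2 ->
  (i,k,j,l) \in quad s1 s2.
Proof.
move=> *; apply: (allpairs_f (fun p l => (p, l))) => //.
apply: (allpairs_f (fun p l => (p, l))) => //.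
exact: (allpairs_f (fun p l => (p, l))).
Qed.

Definition T (n : nat) (X Y : zmat) (i k j l : int) : nat :=
  if [&& 1 <= i, i <= n%:Z, k <= i & j < l] then (X i j * Y k l)%N else 0%N.

Definition S4 (s1 s2 : seq int) (F : int -> int -> int -> int -> nat) : nat :=
  (\sum_(i <- s1) \sum_(k <- s2) \sum_(j <- s2) \sum_(l <- s2) F i k j l)%N.

Definition box (n M : nat) := zbox (1 - (2*M)%:Z) (n + 3*M).

Lemma dmat_box n M B : band M B ->
  d_mat n B = S4 (zbox 1 n) (box n M) (T n B B).
Proof.
move=> hB; rewrite /d_mat.
pose P := fun x : int*int*int*int => let: (i,k,j,l) := x in [&& (1 <= i), (i <= n%:Z), (k <= i) & (j < l)].
pose F := fun x : int*int*int*int => let: (i,k,j,l) := x in (B i j * B k l)%N.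
have -> : [set x : int*int*int*int | let: (i,k,j,l) := x in [/\ (1 <= i), (i <= n%:Z), (k <= i) & (j < l)]]
  = [set x | P x].
  by apply/seteqP; split => -[[[i k] j] l] /= /and4P.
have U : uniq (quad (zbox 1 n) (box n M)) by exact: quad_uniq (zbox_uniq _ _) (zbox_uniq _ _).
have SUB : forall x, P x -> F x != 0%N -> x \in quad (zbox 1 n) (box n M).
  move=> [[[i k] j] l] /and4P [h1 h2 h3 h4].
  rewrite /F muln_eq0 negb_or => /andP [/hB/andP[b1 b2] /hB/andP[b3 b4]].
  by apply: mem_quad; rewrite mem_zbox; lia.
transitivity (\sum_(x <- quad (zbox 1 n) (box n M) | P x) F x)%N; first exact: (@fsum_seq _ P F _ U SUB).
by rewrite big_mkcond !big_allpairs.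
Qed.

Lemma S4_split s1 s2 F G H : (forall i k j l, F i k j l = G i k j l + H i k j l)%N ->
  S4 s1 s2 F = (S4 s1 s2 G + S4 s1 s2 H)%N.
Proof.
move=> h; rewrite /S4 -big_split; apply: eq_bigr => i _; rewrite -big_split.
apply: eq_bigr => k _; rewrite -big_split; apply: eq_bigr => j _; rewrite -big_split.
by apply: eq_bigr => l _.
Qed.

Lemma pw1 n (A : zmat) (lam : int -> nat) : (forall a, A a a = 0%N) -> forall i k j l,
  T n (zmat_add A (zdiag lam)) (zmat_add A (zdiag lam)) i k j l =
  ((T n (upper_part A) (upper_part A) i k j l + T n (upper_part A) (zdiag lam) i k j l
      + T n (zdiag lam) (upper_part A) i k j l)
   + (T n (lower_part A) (lower_part A) i k j l + T n (lower_part A) (zdiag lam) i k j l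
      + T n (zdiag lam) (lower_part A) i k j l)
   + T n (lower_part A) (upper_part A) i k j l)%N.
Proof.
move=> hA i k j l; rewrite /T; case: ifP => // /and4P [h1 h2 h3 h4].
rewrite /zmat_add /upper_part /lower_part /zdiag.
case: (ltgtP i j) => hij; case: (ltgtP k l) => hkl; try subst; rewrite /= ?hA; lia.
Qed.

Lemma pw2 n (A : zmat) (lam rs : int -> nat) : forall i k j l,
  T n (zmat_add (upper_part A) (zdiag (fun x => lam x + rs x)%N))
      (zmat_add (upper_part A) (zdiag (fun x => lam x + rs x)%N)) i k j l =
  ((T n (upper_part A) (upper_part A) i k j l + T n (upper_part A) (zdiag lam) i k j l
      + T n (zdiag lam) (upper_part A) i k j l)
   + T n (zdiag rs) (upper_part A) i k j l)%N.
Proof.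
move=> i k j l; rewrite /T; case: ifP => // /and4P [h1 h2 h3 h4].
rewrite /zmat_add /upper_part /lower_part /zdiag.
case: (ltgtP i j) => hij; case: (ltgtP k l) => hkl; try subst; rewrite /=; lia.
Qed.

Lemma pw3 n (A : zmat) (lam cs : int -> nat) : forall i k j l,
  T n (zmat_add (lower_part A) (zdiag (fun x => lam x + cs x)%N))
      (zmat_add (lower_part A) (zdiag (fun x => lam x + cs x)%N)) i k j l =
  ((T n (lower_part A) (lower_part A) i k j l + T n (lower_part A) (zdiag lam) i k j l
      + T n (zdiag lam) (lower_part A) i k j l)
   + T n (lower_part A) (zdiag cs) i k j l)%N.
Proof.
move=> i k j l; rewrite /T; case: ifP => // /and4P [h1 h2 h3 h4].
rewrite /zmat_add /upper_part /lower_part /zdiag.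
case: (ltgtP i j) => hij; case: (ltgtP k l) => hkl; try subst; rewrite /=; lia.
Qed.

Definition rsum (A : zmat) (i : int) : nat :=
  \big[addn/0%N]_(k \in [set k : int | (k < i)%R]) A i k.
Definition csum (A : zmat) (i : int) : nat :=
  \big[addn/0%N]_(k \in [set k : int | (k < i)%R]) A k i.

Lemma rsum_box M (A : zmat) lo N i : band M A -> lo <= i - M%:Z -> i <= lo + N%:Z ->
  rsum A i = (\sum_(m <- zbox lo N | (m < i)%R) A i m)%N.
Proof.
move=> hA h1 h2; rewrite /rsum.
apply: (@fsum_seq _ (fun m => m < i) (fun m => A i m)); first exact: zbox_uniq.
move=> m hm /hA /andP[b1 b2]; rewrite mem_zbox; lia.
Qed.

Lemma csum_box M (A : zmat) lo N i : band M A -> lo <= i - M%:Z -> i <= lo + N%:Z ->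
  csum A i = (\sum_(m <- zbox lo N | (m < i)%R) A m i)%N.
Proof.
move=> hA h1 h2; rewrite /csum.
apply: (@fsum_seq _ (fun m => m < i) (fun m => A m i)); first exact: zbox_uniq.
move=> m hm /hA /andP[b1 b2]; rewrite mem_zbox; lia.
Qed.

Lemma key n M (A : zmat) : band M A ->
  S4 (zbox 1 n) (box n M) (T n (lower_part A) (upper_part A)) =
  (S4 (zbox 1 n) (box n M) (T n (zdiag (rsum A)) (upper_part A)) +
   S4 (zbox 1 n) (box n M) (T n (lower_part A) (zdiag (csum A))))%N.
Proof.
move=> hA; rewrite /S4 -big_split; apply: eq_big_seq => i; rewrite mem_zbox => /andP[hi1 hi2].
have h1 : 1 <= i by lia.
have h2 : i <= n%:Z by lia.
rewrite /box; set bx := zbox _ _.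
have ib : i \in bx by rewrite mem_zbox; lia.
have ub : uniq bx := zbox_uniq _ _.
have eRU : (\sum_(k <- bx) \sum_(j <- bx) \sum_(l <- bx) T n (zdiag (rsum A)) (upper_part A) i k j l
   = \sum_(j <- bx) \sum_(k <- bx) \sum_(l <- bx)
       (if ([&& j < i, k <= i & i < l])%R then A i j * upper_part A k l else 0))%N.
  transitivity (\sum_(k <- bx) \sum_(l <- bx)
       (if ((k <= i) && (i < l))%R then rsum A i * upper_part A k l else 0))%N.
    apply: eq_bigr => k _; rewrite (bigD1_seq i) //= [X in (_ + X)%N]big1 ?addn0.
      by apply: eq_bigr => l _; rewrite /T /zdiag eqxx h1 h2.
    move=> j hj; apply: big1 => l _; rewrite /T /zdiag.
    have -> : (i == j) = false by rewrite eq_sym (negbTE hj).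
    by rewrite mul0n; case: ifP.
  rewrite (@rsum_box M A (1 - (2 * M)%:Z) (n + 3 * M) i hA); [|lia|lia].
  transitivity (\sum_(k <- bx) \sum_(l <- bx) \sum_(m <- bx)
       (if ([&& m < i, k <= i & i < l])%R then A i m * upper_part A k l else 0))%N.
    apply: eq_bigr => k _; apply: eq_bigr => l _; case: ifP => hkl.
      rewrite big_distrl /= big_mkcond; apply: eq_bigr => m _.
      by rewrite ?hkl andbT.
    by rewrite big1 // => m _; rewrite ?hkl andbF.
  under [LHS]eq_bigr do rewrite exchange_big.
  by rewrite [LHS]exchange_big.
have eLC : (\sum_(k <- bx) \sum_(j <- bx) \sum_(l <- bx) T n (lower_part A) (zdiag (csum A)) i k j l
   = \sum_(j <- bx) \sum_(k <- bx) \sum_(l <- bx)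
       (if ([&& l <= i, j < l & k < l])%R then lower_part A i j * A k l else 0))%N.
  transitivity (\sum_(k <- bx) \sum_(j <- bx)
       (if ((k <= i) && (j < k))%R then lower_part A i j * csum A k else 0))%N.
    apply: eq_big_seq => k kb; apply: eq_bigr => j _; rewrite (bigD1_seq k) //= [X in (_ + X)%N]big1 ?addn0.
      by rewrite /T /zdiag eqxx h1 h2.
    move=> l hl; rewrite /T /zdiag.
    have -> : (k == l) = false by rewrite eq_sym (negbTE hl).
    by rewrite muln0; case: ifP.
  transitivity (\sum_(k <- bx) \sum_(j <- bx) \sum_(m <- bx)
       (if ([&& k <= i, j < k & m < k])%R then lower_part A i j * A m k else 0))%N.
    apply: eq_bigr => k _; apply: eq_bigr => j _; case: ifP => hc; last first.
      by rewrite big1 // => m _; move: hc; case: (k <= i); case: (j < k).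
    case: (eqVneq (lower_part A i j) 0%N) => hL.
      by rewrite hL mul0n big1 // => m _; rewrite mul0n; case: ifP.
    have [hji hAij] : j < i /\ A i j != 0%N.
      by move: hL; rewrite /lower_part; case: ifP.
    move/andP: (hA _ _ hAij) => [b1 b2].
    move/andP: hc => [c1 c2].
    rewrite (@csum_box M A (1 - (2 * M)%:Z) (n + 3 * M) k hA); [|lia|lia].
    rewrite big_distrr /= big_mkcond; apply: eq_bigr => m _.
    by rewrite c1 c2 /=; case: ifP.
  rewrite [LHS]exchange_big; apply: eq_bigr => j _.
  by rewrite [LHS]exchange_big.
have eLU : (\sum_(k <- bx) \sum_(j <- bx) \sum_(l <- bx) T n (lower_part A) (upper_part A) i k j l
   = \sum_(j <- bx) \sum_(k <- bx) \sum_(l <- bx)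
       (if ((k <= i) && (j < l))%R then lower_part A i j * upper_part A k l else 0))%N.
  rewrite [LHS]exchange_big; apply: eq_bigr => j _; apply: eq_bigr => k _; apply: eq_bigr => l _.
  by rewrite /T h1 h2.
rewrite eRU eLC eLU -big_split; apply: eq_bigr => j _; rewrite -big_split.
apply: eq_bigr => k _; rewrite -big_split; apply: eq_bigr => l _ /=.
rewrite /lower_part /upper_part.
case: (leP k i) => ?; case: (ltP j l) => ?; case: (ltP j i) => ?; case: (ltP k l) => ?;
  case: (leP l i) => ? /=; lia.
Qed.

Arguments exists_band {n A}.
Arguments band_add {M X Y}.
Arguments band_upper {M A}.
Arguments band_lower {M A}.
Arguments dmat_box n {M B}.
Arguments S4_split {s1 s2 F G H}.
Arguments pw1 n {A} lam.
Arguments key n {M A}.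

Theorem lemma3p10p2 (n : nat) (A : zmat) (lam : int -> nat) :
  (0 < n)%N ->
  in_Theta n A ->
  (forall i : int, A i i = 0%N) ->
  in_Nn n lam ->
  d_mat n (zmat_add A (zdiag lam)) =
    (d_mat n (zmat_add (upper_part A) (zdiag (mu_of A lam))) +
     d_mat n (zmat_add (lower_part A) (zdiag (nu_of A lam))))%N.
Proof.
move=> n0 hT hA _.
have [M hM] := exists_band n0 hT.
have -> : mu_of A lam = (fun x => lam x + rsum A x)%N by [].
have -> : nu_of A lam = (fun x => lam x + csum A x)%N by [].
rewrite (dmat_box n (band_add hM (band_diag M lam))).
rewrite (dmat_box n (band_add (band_upper hM) (band_diag M _))).
rewrite (dmat_box n (band_add (band_lower hM) (band_diag M _))).
rewrite (S4_split (pw1 n lam hA)) (S4_split (fun i k j l => erefl)).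
rewrite (S4_split (pw2 n A lam (rsum A))) (S4_split (pw3 n A lam (csum A))).
rewrite (key n hM); lia.
Qed.
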